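(* The trace of the matrix $X_{\frac{m}{n}}(q)$ has the following expression in terms of the corresponding $q$-rational: $$ \textup{Tr}\left(X_{\frac{m}{n}}(q)\right)=q\,\mathcal{N}_{\frac{m}{n}}(q)^2+\mathcal{D}_{\frac{m}{n}}(q)^2, $$ where $\mathcal{N}_{\frac{m}{n}}(q)$ and $\mathcal{D}_{\frac{m}{n}}(q)$ are the numerator and denominator of the $q$-deformed rational $\left[\frac{m}{n}\right]_q$.
   Context: Let $\frac{m}{n}>1$ be a rational number with continued fraction expansion $\frac{m}{n}=[a_1,a_2,\ldots,a_k]$, $a_i\geq 1$, where $k$ is odd. Let $$ R_q=\begin{pmatrix} q&1\\ 0&1\end{pmatrix},\qquad L_q=\begin{pmatrix} q&0\\ q&1\end{pmatrix},\qquad X_0=\begin{pmatrix}0&0\\0&1\end{pmatrix}. $$ Set $A_q:=R_q^{a_1}L_q^{a_2}R_q^{a_3}L_q^{a_4}\cdots R_q^{a_k}$ and $A_q^T:=L_q^{a_k}R_q^{a_{k-1}}L_q^{a_{k-2}}\cdots L_q^{a_1}$ (the $q$-deformed transpose of $A_q$, not the ordinary transpose), and define $X_{\frac{m}{n}}(q):=A_q\,X_0\,A_q^T$. The $q$-deformed rational is $\left[\frac{m}{n}\right]_q=A_q\left(\frac{0}{1}\right)=\frac{\mathcal{N}_{\frac{m}{n}}(q)}{\mathcal{D}_{\frac{m}{n}}(q)}$ (action by fractional-linear transformations), with $\mathcal{N}_{\frac{m}{n}}$, $\mathcal{D}_{\frac{m}{n}}$ polynomials in $q$; equivalently the second column of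 $A_q$ is $(\mathcal{N}_{\frac{m}{n}}(q),\mathcal{D}_{\frac{m}{n}}(q))^T$ and the second row of $A_q^T$ is $(q\mathcal{N}_{\frac{m}{n}}(q),\mathcal{D}_{\frac{m}{n}}(q))$. *)

(* Defs.v *)
From HB Require Import structures.
From mathcomp Require Import all_boot all_order all_algebra.
Set Implicit Arguments. Unset Strict Implicit. Unset Printing Implicit Defensive.
Import Order.TTheory GRing.Theory Num.Theory.
Local Open Scope ring_scope.

Definition mx2 {R : Type} (a b c d : R) : 'M[R]_2 :=
  \matrix_(i < 2, j < 2)
    if (i == 0 :> nat) then (if (j == 0 :> nat) then a else b)
    else (if (j == 0 :> nat) then c else d).

(* q is the formal variable 'X of {poly int} *)
Definition Rq : 'M[{poly int}]_2 := mx2 'X 1 0 1.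
Definition Lq : 'M[{poly int}]_2 := mx2 'X 0 'X 1.
Definition X0 : 'M[{poly int}]_2 := mx2 0 0 0 1.

Fixpoint alt_prod (b : bool) (s : seq nat) : 'M[{poly int}]_2 :=
  match s with
  | [::] => 1
  | a :: s' => (if b then Rq else Lq) ^+ a * alt_prod (~~ b) s'
  end.

Definition Aq (s : seq nat) : 'M[{poly int}]_2 := alt_prod true s.
(* q-deformed transpose A_q^T = L^{ak} R^{a(k-1)} ... L^{a1} (k odd) *)
Definition AqT (s : seq nat) : 'M[{poly int}]_2 := alt_prod false (rev s).

Definition Xq (s : seq nat) : 'M[{poly int}]_2 := Aq s * X0 * AqT s.

Definition qN (s : seq nat) : {poly int} := Aq s 0 1.
Definition qD (s : seq nat) : {poly int} := Aq s 1 1.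

Fixpoint cf_value (s : seq nat) : rat :=
  match s with
  | [::] => 0
  | [:: a] => a%:R
  | a :: s' => a%:R + (cf_value s')^-1
  end.

(* Main.v *)
Require Import Defs.
From mathcomp Require Import all_boot all_order all_algebra.
Import GRing.Theory Num.Theory.
Local Open Scope ring_scope.

Definition Pm : 'M[{poly int}]_2 := mx2 1 0 0 'X.

Lemma mx2E (a b c d : {poly int}) (i j : 'I_2) :
  mx2 a b c d i j = if (i == 0 :> nat) then (if (j == 0 :> nat) then a else b)
    else (if (j == 0 :> nat) then c else d).
Proof. by rewrite /mx2 mxE. Qed.

Lemma mul2E (A B : 'M[{poly int}]_2) i j :
  (A * B) i j = A i 0 * B 0 j + A i 1 * B 1 j.
Proof.
rewrite -mulmxE mxE !big_ord_recr big_ord0 /= add0r.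
rewrite (_ : widen_ord _ _ = 0); last by apply/val_inj.
by rewrite (_ : ord_max = 1); last by apply/val_inj.
Qed.

Ltac mxsolve := apply/matrixP => -[[|[|?]] ?] -[[|[|?]] ?] //;
  rewrite ?mul2E ?mxE ?mul2E ?mx2E /= ?mxE ?mx2E /=
  ?mul0r ?mulr0 ?mul1r ?mulr1 ?add0r ?addr0 //.

Lemma LP : Lq * Pm = Pm * Rq^T.
Proof. rewrite /Lq /Pm /Rq. mxsolve; by rewrite mulrC. Qed.

Lemma RP : Rq * Pm = Pm * Lq^T.
Proof. rewrite /Lq /Pm /Rq. mxsolve. Qed.

Lemma trX (M : 'M[{poly int}]_2) a : (M ^+ a)^T = (M^T) ^+ a.
Proof.
elim: a => [|a IH]; first by rewrite !expr0 trmx1.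
by rewrite exprS exprSr -IH -!mulmxE trmx_mul.
Qed.

Lemma commX (M N : 'M[{poly int}]_2) a : M * Pm = Pm * N -> M ^+ a * Pm = Pm * N ^+ a.
Proof.
move=> H; elim: a => [|a IH]; first by rewrite !expr0 mul1r mulr1.
by rewrite exprSr -mulrA H mulrA IH -mulrA -exprSr.
Qed.

Fixpoint revprod (b : bool) (s : seq nat) : 'M[{poly int}]_2 :=
  match s with
  | [::] => 1
  | a :: s' => revprod (~~ b) s' * (if b then Lq else Rq) ^+ a
  end.

Lemma revprodP b s : revprod b s * Pm = Pm * (alt_prod b s)^T.
Proof.
elim: s b => [|a s IH] b /=; first by rewrite trmx1 mul1r mulr1.
rewrite -mulmxE trmx_mul mulmxE -mulrA.
have -> : (if b then Lq else Rq) ^+ a * Pm = Pm * ((if b then Rq else Lq) ^+ a)^T.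
  by rewrite trX; apply: commX; case: b; [exact: LP | exact: RP].
by rewrite [LHS]mulrA IH -mulrA.
Qed.

Lemma alt_cat c s1 s2 :
  alt_prod c (s1 ++ s2) = alt_prod c s1 * alt_prod (if odd (size s1) then ~~ c else c) s2.
Proof.
elim: s1 c => [|a s1 IH] c /=; first by rewrite mul1r.
by rewrite IH mulrA; case: (odd (size s1)); case: c.
Qed.

Lemma revprod_rev b s :
  revprod b s = alt_prod (if odd (size s) then ~~ b else b) (rev s).
Proof.
elim: s b => [|a s IH] b //=.
rewrite rev_cons -cats1 alt_cat size_rev IH /= mulr1.
by case: (odd (size s)); case: b.
Qed.

Theorem proposition1 (m n : nat) (a : seq nat) :
  (0 < n)%N ->
  1 < (m%:R / n%:R : rat) ->
  all (fun x => 0 < x)%N a ->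
  odd (size a) ->
  cf_value a = m%:R / n%:R ->
  \tr (Xq a) = 'X * (qN a) ^+ 2 + (qD a) ^+ 2.
Proof.
move=> _ _ _ Hodd _.
have HT : AqT a * Pm = Pm * (Aq a)^T.
  by rewrite /AqT -revprodP revprod_rev Hodd.
have E0 : AqT a 1 0 = 'X * qN a.
  have := congr1 (fun M : 'M[{poly int}]_2 => M 1 0) HT; rewrite /= !mul2E !mx2E /= !mxE.
  by rewrite mulr1 mulr0 addr0 mul0r add0r.
have E1 : AqT a 1 1 = qD a.
  have := congr1 (fun M : 'M[{poly int}]_2 => M 1 1) HT; rewrite /= !mul2E !mx2E /= !mxE.
  rewrite mulr0 add0r mul0r add0r mulrC => H.
  by apply: (@mulfI _ 'X); [rewrite polyX_eq0 | exact: H].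
rewrite /mxtrace !big_ord_recr big_ord0 /= add0r /Xq !mul2E /X0 !mx2E /=.
rewrite !mulr0 !add0r !mulr1 -/(qN a) -/(qD a).
rewrite (_ : widen_ord _ _ = 0); last by apply/val_inj.
rewrite (_ : ord_max = 1); last by apply/val_inj.
rewrite !mul0r !add0r -/(qN a) -/(qD a) E0 E1.
by rewrite mulrA (mulrC (qN a)) -mulrA -expr2.
Qed.
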